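(* In the setting described in the context, assume the non-degeneracy condition (for every $i\neq i'$ there exists $n$ with $\Lambda_{ni}\neq\Lambda_{ni'}$), and let $U_\circ$ be an exact joint triangularizer of $\{M_n\}$ and $U=U_\circ e^{\alpha X}$ ($X=-X^T$, $\|X\|=1$, $\alpha>0$) an approximate joint triangularizer of $\{\hat M_n\}$ whose $\alpha$ satisfies $\alpha\le2\sqrt2\,\sigma\|\tilde T^{-1}\|_2\sqrt{\sum_n\|M_n\|^2}\sqrt{\sum_n\|W_n\|^2}+O((\alpha+\sigma)^2)$, with $\tilde T=\sum_n\tilde t_n^T\tilde t_n$, $\tilde t_n=P_{\rm low}(1\otimes U_\circ^TM_n^TU_\circ-U_\circ^TM_nU_\circ\otimes1)P_{\rm low}^T$. For all $n$ and $i$ let $\hat\lambda_i(\hat M_n)=[U^T\hat M_nU]_{ii}$ and $\lambda_i(M_n)=[U_\circ^TM_nU_\circ]_{ii}$. Then for all $n=1,\dots,N$ and $i=1,\dots,d$, $$|\hat\lambda_i(\hat M_n)-\lambda_i(M_n)|\le2\alpha\|M_n\|+\sigma\|W_n\|+O(\alpha^2).$$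
   Context: All matrices are real; $\|\cdot\|$ is the Frobenius norm, $\|\cdot\|_2$ the spectral norm. ${\rm low}(A)$ is the strictly lower-triangular part of $A$; $\otimes$ the Kronecker product; $1$ the identity. $P_{\rm low}\in\{0,1\}^{\frac{d(d-1)}2\times d^2}$ has as rows the standard basis row vectors of $\mathbb R^{d^2}$ selecting (in increasing order) the entries of the column-wise vectorization of a matrix corresponding to its strictly lower-triangular entries. Model: $\hat M_n=M_n+\sigma W_n$, $M_n=V\,{\rm diag}(\Lambda_{n1},\dots,\Lambda_{nd})V^{-1}$, $n=1,\dots,N$, $V$ real invertible, $\Lambda_{ni}$ real, $\sigma>0$, $\|W_n\|\le1$. Exact joint triangularizer of $\{M_n\}$: orthogonal $U_\circ$ with ${\rm low}(U_\circ^TM_nU_\circ)=0$ for all $n$. Approximate joint triangularizer of $\{\hat M_n\}$: solution (stationary point) of $\min_{U\in\mathbb O(d)}\sum_n\|{\rm low}(U^T\hat M_nU)\|^2$. Inequalities are first-order, valid up to the indicated second-order terms. *)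

(* Defs.v *)
From HB Require Import structures.
From mathcomp Require Import all_boot all_order all_algebra.
From mathcomp Require Import all_classical all_reals all_analysis.
Set Implicit Arguments. Unset Strict Implicit. Unset Printing Implicit Defensive.
Import Order.TTheory GRing.Theory Num.Theory.
Import numFieldNormedType.Exports.
Local Open Scope classical_set_scope.
Local Open Scope ring_scope.

Section Defs.
Variable R : realType.

Definition frob (m n : nat) (A : 'M[R]_(m, n)) : R :=
  Num.sqrt (\sum_(i < m) \sum_(j < n) A i j ^+ 2).

Definition specnorm (m n : nat) (A : 'M[R]_(m, n)) : R :=
  sup [set frob (A *m x) | x in [set x : 'cV[R]_n | frob x <= 1]].

Definition low (d : nat) (A : 'M[R]_d) : 'M[R]_d :=
  \matrix_(i, j) (if (j < i)%N then A i j else 0).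

(* entry (i,j) of A given natural-number indices (0 if out of range) *)
Definition mxat (m n : nat) (A : 'M[R]_(m, n)) (i j : nat) : R :=
  \sum_(i' < m | val i' == i) \sum_(j' < n | val j' == j) A i' j'.

(* Kronecker product of two d x d matrices; block row/column index k
   corresponds to (k %/ d, k %% d) *)
Definition kron (d : nat) (A B : 'M[R]_d) : 'M[R]_(d * d) :=
  \matrix_(k, l) (mxat A (k %/ d) (l %/ d) * mxat B (k %% d) (l %% d)).

(* Column-wise vectorization: entry (i,j) of a d x d matrix sits at index
   i + d * j; it is strictly lower-triangular iff j < i, i.e.
   k %/ d < k %% d.  The list of such indices in increasing order: *)
Definition lowidx (d : nat) : seq nat :=
  [seq k <- iota 0 (d * d) | (k %/ d < k %% d)%N].

Definition Plow (d : nat) : 'M[R]_(d * (d - 1) %/ 2, d * d) :=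
  \matrix_(r, k) ((nth 0%N (lowidx d) r == val k)%:R).

Definition expm (d : nat) (A : 'M[R]_d) : 'M[R]_d :=
  limn (series (fun k : nat => (k`!%:R)^-1 *: A ^+ k)).

Definition orthogonal (d : nat) (U : 'M[R]_d) : Prop := U^T *m U = 1%:M.

Definition jt_obj (d N : nat) (Mh : 'I_N -> 'M[R]_d) (U : 'M[R]_d) : R :=
  \sum_(n < N) frob (low (U^T *m Mh n *m U)) ^+ 2.

(* stationary point of the objective on O(d): orthogonal, and the derivative
   along every geodesic t |-> U exp(tY), Y skew, vanishes at t = 0 *)
Definition approx_joint_triangularizer (d N : nat) (Mh : 'I_N -> 'M[R]_d)
    (U : 'M[R]_d) : Prop :=
  orthogonal U /\
  forall Y : 'M[R]_d, Y^T = - Y ->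
    is_derive (0 : R) (1 : R) (fun t : R => jt_obj Mh (U *m expm (t *: Y))) 0.

Definition exact_joint_triangularizer (d N : nat) (M : 'I_N -> 'M[R]_d)
    (U : 'M[R]_d) : Prop :=
  orthogonal U /\ forall n, low (U^T *m M n *m U) = 0.

Definition ttilde (d : nat) (U0 Mn : 'M[R]_d) : 'M[R]_(d * (d - 1) %/ 2) :=
  Plow d *m (kron 1%:M (U0^T *m Mn^T *m U0) - kron (U0^T *m Mn *m U0) 1%:M)
    *m (Plow d)^T.

Definition Ttilde (d N : nat) (U0 : 'M[R]_d) (M : 'I_N -> 'M[R]_d)
    : 'M[R]_(d * (d - 1) %/ 2) :=
  \sum_(n < N) (ttilde U0 (M n))^T *m ttilde U0 (M n).

End Defs.

(* Main.v *)
Require Import Defs.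
Set Warnings "-notation-overridden,-ambiguous-paths,-notation-incompatible-prefix".
From HB Require Import structures.
From mathcomp Require Import all_boot all_order all_algebra.
From mathcomp Require Import all_classical all_reals all_analysis.
From mathcomp Require Import ring lra.
Import Order.TTheory GRing.Theory Num.Theory.
Import numFieldNormedType.Exports.
Set Implicit Arguments.
Unset Strict Implicit.
Local Open Scope classical_set_scope.
Local Open Scope ring_scope.
Section S. Variable R : realType. Variable d : nat.
Lemma entry_le (A : 'M[R]_d) i j : `|A i j| <= `|A|.
Proof.
rewrite [X in _ <= X]/Num.norm /= mx_normrE.
by apply/bigmax_geP; right; exists (i, j).
Qed.

Lemma norm_le_entries (A : 'M[R]_d) c : 0 <= c -> (forall i j, `|A i j| <= c) -> `|A| <= c.
Proof.
move=> c0 H; rewrite [X in X <= _]/Num.norm /= mx_normrE.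
by apply/bigmax_leP; split => // -[i j] _; apply: H.
Qed.

Lemma norm_mul (A B : 'M[R]_d) : `|A *m B| <= d%:R * `|A| * `|B|.
Proof.
apply: norm_le_entries; first by rewrite !mulr_ge0.
move=> i j; rewrite mxE; apply: le_trans (ler_norm_sum _ _ _) _.
apply: le_trans (_ : \sum_(k < d) (`|A| * `|B|) <= _).
  by apply: ler_sum => k _; rewrite normrM; apply: ler_pM => //; exact: entry_le.
by rewrite sumr_const card_ord mulr_natl mulrnAl.
Qed.

Lemma norm_one : `|(1%:M : 'M[R]_d)| <= 1.
Proof.
apply: norm_le_entries => // i j; rewrite mxE; case: (i == j) => /=; by rewrite ?normr1 ?normr0.
Qed.

Lemma norm_exp (A : 'M[R]_d) k : `|A ^+ k| <= (d%:R * `|A|) ^+ k.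
Proof.
elim: k => [|k IH]; first by rewrite expr0 expr0; exact: norm_one.
rewrite exprSr -mulmxE exprSr.
apply: le_trans (norm_mul _ _) _.
rewrite [X in _ <= X]mulrC mulrAC; by apply: ler_wpM2l.
Qed.

Lemma geo_le (t : R) m : 0 <= t -> t <= 2^-1 -> \sum_(0 <= k < m) t ^+ k <= 2 - 2 * t ^+ m.
Proof.
move=> t0 th; elim: m => [|m IH]; first by rewrite big_geq // expr0 mulr1 subrr.
rewrite big_nat_recr //=; apply: le_trans (lerD IH (lexx _)) _.
rewrite exprSr -addrA lerD2l.
have h : 2 * (t ^+ m * t) <= t ^+ m.
  rewrite mulrCA; apply: ler_piMr; first exact: exprn_ge0.
  by rewrite -(ler_pM2l (_ : 0 < 2^-1)) // mulrA mulVf // mul1r mulr1.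
lra.
Qed.

Lemma ncvg (u_ : (matrix R d d)^nat) : cvgn (series (fun n => (`|u_ n| : R))) -> cvgn (series u_).
Proof.
move=> /cauchy_cvgP/cauchy_seriesP u_ncvg.
apply/cauchy_cvgP/cauchy_seriesP => e /u_ncvg.
apply: filterS => n /=; rewrite ger0_norm ?sumr_ge0//.
by apply: le_lt_trans; apply: ler_norm_sum.
Qed.

Definition fexp (A : 'M[R]_d) (k : nat) : 'M[R]_d := (k`!%:R)^-1 *: A ^+ k.

Lemma expm_approx (X : 'M[R]_d) (a : R) : `|X| <= 1 -> 0 <= a ->
  d%:R * a <= 2^-1 -> `|expm (a *: X) - (1%:M + a *: X)| <= 2 * (d%:R * a) ^+ 2.
Proof.
move=> X1 a0 th; set t := d%:R * a.
have t0 : 0 <= t by rewrite mulr_ge0.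
have aX : `|a *: X| <= a by rewrite normrZ ger0_norm // ler_piMr.
have fb : forall k, `|fexp (a *: X) k| <= t ^+ k.
  move=> k; have hk : 0 <= (k`!%:R : R)^-1 by rewrite invr_ge0.
  rewrite /fexp normrZ (ger0_norm hk).
  apply: le_trans (_ : 1 * (d%:R * `|a *: X|) ^+ k <= _).
    apply: ler_pM => //.
      by rewrite invf_le1 ?ler1n ?ltr0n ?fact_gt0.
    exact: norm_exp.
  by rewrite mul1r; apply: lerXn2r; rewrite ?nnegrE ?mulr_ge0 // ler_wpM2l.
have cv : cvgn (series (fexp (a *: X))).
  apply: ncvg; apply: (@series_le_cvg _ _ (geometric 1 t)).
  - by move=> n.
  - by move=> n; rewrite /geometric /= mul1r exprn_ge0.
  - by move=> n; rewrite /geometric /= mul1r.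
  apply: is_cvg_geometric_series; rewrite ger0_norm //.
  by apply: le_lt_trans th _; rewrite invf_lt1 // ltr1n.
rewrite /expm -/(fexp _).
have hlim : (fun n => `|series (fexp (a *: X)) n - (1%:M + a *: X)|) @ \oo -->
    `|limn (series (fexp (a *: X))) - (1%:M + a *: X)|.
  by apply: cvg_norm; apply: cvgB => //; exact: cvg_cst.
have hs : forall m, `|series (fexp (a *: X)) m.+2 - (1%:M + a *: X)| <= 2 * t ^+ 2.
  move=> m; rewrite /series /= big_nat_recl // big_nat_recl //.
  have -> : fexp (a *: X) 0 = 1%:M by rewrite /fexp expr0 fact0 invr1 scale1r.
  have -> : fexp (a *: X) 1 = a *: X by rewrite /fexp expr1 (_ : 1`! = 1)%N // invr1 scale1r.
  have e : forall u v w : 'M[R]_d, u + (v + w) - (u + v) = w.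
    by move=> u v w; rewrite addrA [_ + w]addrC addrK.
  rewrite e.
  apply: le_trans (ler_norm_sum _ _ _) _.
  apply: le_trans (_ : \sum_(0 <= i < m) t ^+ 2 * t ^+ i <= _).
    by apply: ler_sum => i _; rewrite -exprD addnC addn2; apply: fb.
  rewrite -mulr_sumr mulrC; apply: ler_wpM2r; first exact: exprn_ge0.
  apply: le_trans (geo_le m t0 th) _.
  by rewrite lerBlDr lerDl mulr_ge0 // exprn_ge0.
apply: (cvgr_to_le hlim).
near=> n.
have hn : (2 <= n)%N by near: n; exact: nbhs_infty_ge.
by rewrite -(subnK hn) addn2; apply: hs.
Unshelve. all: by end_near.
Qed.

Lemma CS (a b : 'I_d -> R) :
  (\sum_i a i * b i) ^+ 2 <= (\sum_i a i ^+ 2) * (\sum_i b i ^+ 2).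
Proof.
have H : 0 <= \sum_i \sum_j (a i * b j - a j * b i) ^+ 2.
  by apply: sumr_ge0 => i _; apply: sumr_ge0 => j _; exact: sqr_ge0.
have E : \sum_i \sum_j (a i * b j - a j * b i) ^+ 2 =
   (\sum_i a i ^+ 2) * (\sum_i b i ^+ 2) + (\sum_i b i ^+ 2) * (\sum_i a i ^+ 2)
   - 2 * ((\sum_i a i * b i) * (\sum_i a i * b i)).
  rewrite !big_distrlr /= mulr_sumr -big_split -sumrB; apply: eq_bigr => i _.
  rewrite mulr_sumr -big_split -sumrB; apply: eq_bigr => j _ /=; ring.
rewrite E in H; rewrite expr2; lra.
Qed.

Lemma sqrt_sum_ge0 (a : 'I_d -> R) : 0 <= \sum_i a i ^+ 2.
Proof. by apply: sumr_ge0 => i _; exact: sqr_ge0. Qed.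

Lemma CSabs (a b : 'I_d -> R) :
  `|\sum_i a i * b i| <= Num.sqrt (\sum_i a i ^+ 2) * Num.sqrt (\sum_i b i ^+ 2).
Proof.
rewrite -sqrtrM ?sqrt_sum_ge0 // -sqrtr_sqr ler_sqrt ?CS //.
exact: mulr_ge0 (sqrt_sum_ge0 _) (sqrt_sum_ge0 _).
Qed.

Definition nc (A : 'M[R]_d) i := Num.sqrt (\sum_j A j i ^+ 2).

Lemma nc_ge0 A i : 0 <= nc A i.
Proof. exact: sqrtr_ge0. Qed.

Lemma bil (A M B : 'M[R]_d) i :
  (A^T *m M *m B) i i = \sum_j A j i * (\sum_k M j k * B k i).
Proof.
rewrite mxE.
under eq_bigr do rewrite mxE mulr_suml.
rewrite exchange_big /=; apply: eq_bigr => j _; rewrite mulr_sumr.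
by apply: eq_bigr => k _; rewrite mxE mulrA.
Qed.

Lemma Lbil (A M B : 'M[R]_d) i :
  `|(A^T *m M *m B) i i| <= nc A i * nc B i * frob M.
Proof.
rewrite bil; apply: le_trans (CSabs _ _) _.
rewrite -mulrA; apply: ler_wpM2l; first exact: nc_ge0.
rewrite /nc /frob -sqrtrM ?sqrt_sum_ge0 // ler_sqrt; last first.
  by apply: mulr_ge0; [exact: sqrt_sum_ge0|apply: sumr_ge0 => j _; exact: sqrt_sum_ge0].
rewrite mulr_sumr; apply: ler_sum => j _.
by rewrite mulrC; apply: CS.
Qed.

Lemma nc_sq (A : 'M[R]_d) i : \sum_j A j i ^+ 2 = (A^T *m A) i i.
Proof. by rewrite mxE; apply: eq_bigr => j _; rewrite mxE expr2. Qed.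

Lemma nc_orth (U A : 'M[R]_d) i : U^T *m U = 1%:M -> nc (U *m A) i = nc A i.
Proof.
move=> hU; rewrite /nc !nc_sq trmx_mul !mulmxA -(mulmxA _ U^T) hU mulmx1.
by [].
Qed.

Lemma nc_one (U : 'M[R]_d) i : U^T *m U = 1%:M -> nc U i = 1.
Proof. by move=> hU; rewrite /nc nc_sq hU mxE eqxx /= sqrtr1. Qed.

Lemma nc_le_frob (X : 'M[R]_d) i : nc X i <= frob X.
Proof.
rewrite /nc /frob ler_sqrt; last by apply: sumr_ge0 => j _; exact: sqrt_sum_ge0.
apply: ler_sum => j _; rewrite (bigD1 i) //= lerDl.
by apply: sumr_ge0 => k _; exact: sqr_ge0.
Qed.

Lemma entry_le_frob (X : 'M[R]_d) i j : `|X i j| <= frob X.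
Proof.
rewrite -sqrtr_sqr /frob ler_sqrt; last by apply: sumr_ge0 => k _; exact: sqrt_sum_ge0.
rewrite (bigD1 i) //= (bigD1 j) //= -addrA lerDl addr_ge0 //.
  by apply: sumr_ge0 => k _; exact: sqr_ge0.
by apply: sumr_ge0 => k _; exact: sqrt_sum_ge0.
Qed.

Lemma frob_ge0 (X : 'M[R]_d) : 0 <= frob X.
Proof. exact: sqrtr_ge0. Qed.

Lemma nc_entries (A : 'M[R]_d) i c : 0 <= c -> (forall j, `|A j i| <= c) ->
  nc A i <= d%:R * c.
Proof.
move=> c0 H; rewrite /nc -(ger0_norm (_ : 0 <= d%:R * c)); last exact: mulr_ge0.
rewrite -sqrtr_sqr ler_sqrt; last exact: sqr_ge0.
apply: le_trans (_ : \sum_(j < d) c ^+ 2 <= _).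
  apply: ler_sum => j _; rewrite -(real_normK (num_real (A j i))).
  by rewrite lerXn2r ?nnegrE //.
rewrite sumr_const card_ord exprMn -[_ *+ d]mulr_natl.
apply: ler_wpM2r; first exact: exprn_ge0.
case: d => [|k]; first by rewrite expr2 mul0r.
by rewrite expr2 -natrM ler_nat leq_pmull.
Qed.

Lemma mxaddE (A B : 'M[R]_d) i j : (A + B) i j = A i j + B i j.
Proof. by rewrite mxE. Qed.
Lemma mxscaleE a (A : 'M[R]_d) i j : (a *: A) i j = a * A i j.
Proof. by rewrite mxE. Qed.

Lemma expand (A B Q Mx : 'M[R]_d) (a : R) i :
  let Y := A + a *: B + Q in
  (Y^T *m Mx *m Y) i i - (A^T *m Mx *m A) i i =
  a * ((A^T *m Mx *m B) i i + (B^T *m Mx *m A) i i)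
  + (A^T *m Mx *m Q) i i + (Q^T *m Mx *m A) i i
  + a ^+ 2 * (B^T *m Mx *m B) i i
  + a * ((B^T *m Mx *m Q) i i + (Q^T *m Mx *m B) i i)
  + (Q^T *m Mx *m Q) i i.
Proof.
rewrite /= !raddfD /= !linearZ /= !mulmxDl -!scalemxAl !(mxaddE, mxscaleE).
ring.
Qed.

Lemma tb (P Q Mx : 'M[R]_d) i p q : nc P i <= p -> nc Q i <= q ->
  `|(P^T *m Mx *m Q) i i| <= p * q * frob Mx.
Proof.
move=> hp hq; apply: le_trans (Lbil _ _ _ i) _.
apply: ler_wpM2r; first exact: frob_ge0.
by apply: ler_pM => //; exact: nc_ge0.
Qed.

Lemma final_ineq (a s m w rho K Ms T1 T2 T3 T4 T5 T6 T7 T8 TW : R) :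
 0 <= a -> a <= 1 -> 0 <= s -> 0 <= m -> m <= Ms -> 0 <= rho ->
 rho <= K * a ^+ 2 -> 0 <= K ->
 `|T1| <= m -> `|T2| <= m -> `|T3| <= rho * m -> `|T4| <= rho * m ->
 `|T5| <= m -> `|T6| <= rho * m -> `|T7| <= rho * m -> `|T8| <= rho * rho * m ->
 `|TW| <= w ->
 `|a * (T1 + T2) + T3 + T4 + a ^+ 2 * T5 + a * (T6 + T7) + T8 + s * TW|
   <= 2 * a * m + s * w + (4 * K + 1 + K ^+ 2) * Ms * a ^+ 2.
Proof.
move=> a0 a1 s0 m0 mM r0 rK K0 h1 h2 h3 h4 h5 h6 h7 h8 hw.
apply: le_trans (_ : `|a * (T1 + T2)| + `|T3| + `|T4| + `|a ^+ 2 * T5|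
   + `|a * (T6 + T7)| + `|T8| + `|s * TW| <= _).
  by do 6 (apply: le_trans (ler_normD _ _) _; apply: lerD => //).
have a20 : 0 <= a ^+ 2 by apply: exprn_ge0.
rewrite !normrM (ger0_norm a0) (ger0_norm s0).
have e12 : `|T1 + T2| <= 2 * m by apply: le_trans (ler_normD _ _) _; lra.
have e67 : `|T6 + T7| <= 2 * (rho * m) by apply: le_trans (ler_normD _ _) _; lra.
have Ms0 : 0 <= Ms by apply: le_trans mM.
have r1 : rho * m <= K * a ^+ 2 * Ms by apply: ler_pM.
have ar : a * rho <= rho by rewrite ler_piMl.
have r2 : a * (rho * m) <= K * a ^+ 2 * Ms.
  by rewrite mulrA; apply: le_trans r1; apply: ler_wpM2r.
have a4 : a ^+ 2 * a ^+ 2 <= a ^+ 2 by rewrite ler_piMl // exprn_ile1.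
have rr : rho * rho <= K ^+ 2 * a ^+ 2.
  apply: le_trans (_ : (K * a ^+ 2) * (K * a ^+ 2) <= _); first by apply: ler_pM.
  rewrite mulrACA -expr2; apply: ler_wpM2l; first exact: exprn_ge0.
  exact: a4.
have r3 : rho * rho * m <= K ^+ 2 * a ^+ 2 * Ms.
  apply: ler_pM => //; exact: mulr_ge0.
have r4 : a ^+ 2 * m <= a ^+ 2 * Ms by apply: ler_wpM2l.
have t1 : a * `|T1 + T2| <= a * (2 * m) by apply: ler_wpM2l.
have t2 : a ^+ 2 * `|T5| <= a ^+ 2 * m by apply: ler_wpM2l.
have t3 : a * `|T6 + T7| <= a * (2 * (rho * m)) by apply: ler_wpM2l.
have t4 : s * `|TW| <= s * w by apply: ler_wpM2l.
have r2' : a * (2 * (rho * m)) <= 2 * (K * a ^+ 2 * Ms) by rewrite mulrCA; apply: ler_wpM2l.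
have ex : (4 * K + 1 + K ^+ 2) * Ms * a ^+ 2 =
  4 * (K * a ^+ 2 * Ms) + a ^+ 2 * Ms + K ^+ 2 * a ^+ 2 * Ms by ring.
rewrite ex; lra.
Qed.
End S.

Theorem lemma12 (R : realType) (d N : nat) (V : 'M[R]_d)
    (Lam : 'I_N -> 'I_d -> R) (M : 'I_N -> 'M[R]_d) (U0 : 'M[R]_d) :
  V \in unitmx ->
  (forall n, M n = V *m diag_mx (\row_i Lam n i) *m invmx V) ->
  (forall i i' : 'I_d, i != i' -> exists n, Lam n i != Lam n i') ->
  exact_joint_triangularizer M U0 ->
  forall C1 : R, 0 <= C1 ->
  exists C : R, exists delta : R, 0 < delta /\
  forall (sigma : R) (W : 'I_N -> 'M[R]_d) (X : 'M[R]_d) (alpha : R),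
    0 < sigma -> (forall n, frob (W n) <= 1) ->
    X^T = - X -> frob X = 1 -> 0 < alpha -> alpha < delta ->
    approx_joint_triangularizer (fun n => M n + sigma *: W n)
      (U0 *m expm (alpha *: X)) ->
    alpha <= 2 * Num.sqrt 2 * sigma * specnorm (invmx (Ttilde U0 M))
             * Num.sqrt (\sum_(n < N) frob (M n) ^+ 2)
             * Num.sqrt (\sum_(n < N) frob (W n) ^+ 2)
             + C1 * (alpha + sigma) ^+ 2 ->
    forall (n : 'I_N) (i : 'I_d),
      let U := U0 *m expm (alpha *: X) in
      `| (U^T *m (M n + sigma *: W n) *m U) i i - (U0^T *m M n *m U0) i i |
        <= 2 * alpha * frob (M n) + sigma * frob (W n) + C * alpha ^+ 2.
Proof.
move=> _ _ _ [hU0 _] C1 _.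
set Ms := \sum_(n < N) frob (M n).
set K : R := 2 * (d%:R ^+ 3).
have K0 : 0 <= K by rewrite mulr_ge0 // exprn_ge0.
have dp : 0 < 2 * (d%:R + 1 : R) by rewrite mulr_gt0 // ltr_pwDr.
exists ((4 * K + 1 + K ^+ 2) * Ms), ((2 * (d%:R + 1))^-1).
split; first by rewrite invr_gt0.
move=> sigma W X alpha hs hW hXs hX1 ha hd [hU _] _ n i /=.
set U := U0 *m expm (alpha *: X).
rewrite /orthogonal -/U in hU.
have hd' : alpha * (2 * (d%:R + 1)) < 1 by rewrite -ltr_pdivlMr // div1r.
have d0 : 0 <= (d%:R : R) by [].
have hda2 : 2 * (d%:R * alpha) <= 1 by lra.
have hda : d%:R * alpha <= 2^-1 by rewrite -(ler_pM2l (_ : (0:R) < 2)) // mulfV.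
have hda0 : 0 <= d%:R * alpha by rewrite mulr_ge0 // ltW.
have ha1 : alpha <= 1 by lra.
have hXn : `|X| <= 1.
  by apply: norm_le_entries => // j k; rewrite -hX1; exact: entry_le_frob.
set Rm := expm (alpha *: X) - (1%:M + alpha *: X).
have hR : `|Rm| <= 2 * (d%:R * alpha) ^+ 2 by apply: expm_approx => //; exact: ltW.
have hE : U = U0 + alpha *: (U0 *m X) + U0 *m Rm.
  by rewrite /U /Rm scalemxAr -[X in X + _ + _]mulmx1 -!mulmxDr [_ + (_ - _)]addrC subrK.
have hA : nc U0 i <= 1 by rewrite nc_one.
have hUn : nc U i <= 1 by rewrite nc_one.
have hB : nc (U0 *m X) i <= 1 by rewrite nc_orth // -hX1; exact: nc_le_frob.
have hQ : nc (U0 *m Rm) i <= K * alpha ^+ 2.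
  rewrite nc_orth //.
  apply: le_trans (@nc_entries R d Rm i (2 * (d%:R * alpha) ^+ 2) _ _) _.
  - by rewrite mulr_ge0 // exprn_ge0.
  - by move=> j; apply: le_trans (entry_le _ _ _) hR.
  by rewrite /K le_eqVlt; apply/orP; left; apply/eqP; ring.
rewrite mulmxDr mulmxDl -scalemxAr -scalemxAl !(mxaddE, mxscaleE) addrAC.
have ex := @expand R d U0 (U0 *m X) (U0 *m Rm) (M n) alpha i.
rewrite /= -hE in ex; rewrite ex.
have hW1 : `|(U^T *m W n *m U) i i| <= frob (W n).
  by apply: le_trans (tb _ hUn hUn) _; rewrite !mul1r.
apply: (final_ineq (rho := K * alpha ^+ 2)) => //.
- exact: ltW.
- exact: ltW.
- exact: frob_ge0.
- by rewrite /Ms (bigD1 n) //= lerDl sumr_ge0 // => k _; exact: frob_ge0.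
- exact: mulr_ge0 K0 (exprn_ge0 _ (ltW ha)).
- by apply: le_trans (tb _ hA hB) _; rewrite !mul1r.
- by apply: le_trans (tb _ hB hA) _; rewrite !mul1r.
- by apply: le_trans (tb _ hA hQ) _; rewrite !mul1r.
- by apply: le_trans (tb _ hQ hA) _; rewrite !mulr1.
- by apply: le_trans (tb _ hB hB) _; rewrite !mul1r.
- by apply: le_trans (tb _ hB hQ) _; rewrite !mul1r.
- by apply: le_trans (tb _ hQ hB) _; rewrite !mulr1.
- exact: tb.
Qed.
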